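(* For $\epsilon\in\mathbb{C}$, the Poisson bracket $\Psi(\Pi_0+\epsilon\Pi_\infty)$ on $V=\mathrm{Mat}_{k\times k}(\mathbb{C})\oplus\mathrm{Mat}_{k\times k}(\mathbb{C})$, where $\Pi_0=[xx^*,x^*]+[yx^*,y^*]$ and $\Pi_\infty=[yy^*,yxx^*+y^2y^*]$, is generically nondegenerate, and the corresponding symplectic form is $\mathrm{tr}\,d(Y^{-1}-\epsilon X)^{-1}\wedge d\big(X(Y^{-1}-\epsilon X)\big)$.
   Context: $Q$ is the quiver with one vertex and two loops $x,y$; $\mathbb{C}\bar Q=\mathbb{C}\langle x,y,x^*,y^*\rangle$, graded by the number of starred letters. $\mathcal{V}Q$ is the quotient of $\mathbb{C}\bar Q$ by the span of $PR-(-1)^{pr}RP$ for $P,R$ homogeneous of degrees $p,r$; $[u,v]=uv-vu$. $\mathrm{Rep}(Q,k)=V$, with the point $(X,Y)$ assigning $X$ to $x$ and $Y$ to $y$. Cotangent vectors at $(X,Y)$ are pairs $(A,B)$ paired with tangent vectors $(U,W)$ by $\mathrm{tr}(AU+BW)$. For a monomial $P=P_1a_1^*P_2\cdots P_ra_r^*P_{r+1}$ ($P_i$ monomials in $x,y$, $a_i\in\{x,y\}$), $\Psi(P)$ is the $r$-vector field on $V$ obtained by restricting to alternating tensors the form $(C^1,\dots,C^r)\mapsto\mathrm{tr}\big(P_1(X,Y)C^1_{a_1}P_2(X,Y)\cdots C^r_{a_r}P_{r+1}(X,Y)\big)$, with $C^j_x=A^j$, $C^j_y=B^j$ for $C^j=(A^j,B^j)$;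 $\Psi$ extends linearly and descends to $\mathcal{V}Q$. A generically nondegenerate Poisson bivector determines a symplectic form (its inverse) on its nondegeneracy locus. *)

(* Defs.v *)
From mathcomp Require Import all_boot all_algebra.
From mathcomp Require Import complex.
From mathcomp Require Import Rstruct.

Set Implicit Arguments.
Unset Strict Implicit.
Unset Printing Implicit Defensive.
Import GRing.Theory.
Local Open Scope ring_scope.

Definition C : fieldType := (Rdefinitions.R)[i].

(* The free algebra  C<x, y, x*, y*>  = C \bar Q  for the quiver with *)
(* one vertex and two loops x, y, as formal linear combinations of   *)
(* words.                                                            *)
Inductive letter := Lx | Ly | Lxs | Lys.
Definition word := seq letter.
Definition ncpoly := seq (C * word).

Definition ncadd (p q : ncpoly) : ncpoly := p ++ q.
Definition ncscale (c : C) (p : ncpoly) : ncpoly :=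
  [seq (c * t.1, t.2) | t <- p].
Definition ncopp (p : ncpoly) : ncpoly := ncscale (-1) p.
Definition ncmul (p q : ncpoly) : ncpoly :=
  [seq (a.1 * b.1, a.2 ++ b.2) | a <- p, b <- q].
Definition nccomm (u v : ncpoly) : ncpoly :=
  ncadd (ncmul u v) (ncopp (ncmul v u)).

Definition gen (l : letter) : ncpoly := [:: (1, [:: l])].
Definition nx := gen Lx.
Definition ny := gen Ly.
Definition nxs := gen Lxs.
Definition nys := gen Lys.

Definition Pi0 : ncpoly :=
  ncadd (nccomm (ncmul nx nxs) nxs) (nccomm (ncmul ny nxs) nys).

Definition Pi_inf : ncpoly :=
  nccomm (ncmul ny nys)
         (ncadd (ncmul ny (ncmul nx nxs)) (ncmul (ncmul ny ny) nys)).

(* Rep(Q,k) = V = Mat_k(C) + Mat_k(C); a point is (X, Y), a tangent  *)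
(* vector is (U, W), a cotangent vector is (A, B), paired with       *)
(* tangent vectors via tr(A U + B W).                                *)
Section Rep.
Variable k : nat.
Notation M := 'M[C]_k.

Definition pairing (a u : M * M) : C := \tr (a.1 *m u.1 + a.2 *m u.2).

(* Evaluate a word at the point (X,Y), substituting the successive     *)
(* covectors of cs for the successive starred letters:                 *)
(* C^j_x = A^j, C^j_y = B^j.                                            *)
Fixpoint eval_word (X Y : M) (cs : seq (M * M)) (w : word) : M :=
  match w with
  | [::] => 1%:M
  | Lx :: w' => X *m eval_word X Y cs w'
  | Ly :: w' => Y *m eval_word X Y cs w'
  | Lxs :: w' => (head (0, 0) cs).1 *m eval_word X Y (behead cs) w'
  | Lys :: w' => (head (0, 0) cs).2 *m eval_word X Y (behead cs) w'
  end.

(* The bilinear form (C^1, C^2) |-> tr(P_1 C^1_{a_1} P_2 C^2_{a_2} P_3), *)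
(* extended linearly (for P homogeneous of degree 2).                     *)
Definition psi_form2 (P : ncpoly) (X Y : M) (a b : M * M) : C :=
  \sum_(t <- P) t.1 * \tr (eval_word X Y [:: a; b] t.2).

(* Psi(P): the bivector obtained by restricting the form to alternating *)
(* tensors, a /\ b = (a (x) b - b (x) a) / 2.                            *)
Definition Psi2 (P : ncpoly) (X Y : M) (a b : M * M) : C :=
  (psi_form2 P X Y a b - psi_form2 P X Y b a) / 2%:R.

Definition bivector_nondegenerate (pi : M * M -> M * M -> C) : Prop :=
  forall a : M * M, (forall b, pi a b = 0) -> a = (0, 0).

(* omega (a 2-form on tangent vectors) is the inverse of pi:          *)
(* viewing pi as pi^# : T^* -> T, a |-> pi(a, .), and omega as          *)
(* omega^b : T -> T^*, u |-> omega(u, .), we have omega^b o pi^# = id.  *)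
Definition inverse_form (pi : M * M -> M * M -> C)
    (omega : M * M -> M * M -> C) : Prop :=
  forall (a u : M * M),
    (forall g : M * M, pairing g u = pi a g) ->
    forall v : M * M, omega u v = pairing a v.

Definition dinv (S dS : M) : M := - (invmx S *m dS *m invmx S).

(* The 2-form  tr d(Y^{-1} - eps X)^{-1} /\ d(X (Y^{-1} - eps X))     *)
(* at the point (X,Y), evaluated on tangent vectors u = (U, W), v.     *)
(* (dF /\ dG)(u, v) = dF(u) dG(v) - dF(v) dG(u).                      *)
Definition dS (eps : C) (X Y : M) (u : M * M) : M :=
  dinv Y u.2 - eps *: u.1.
Definition dF (eps : C) (X Y : M) (u : M * M) : M :=
  dinv (invmx Y - eps *: X) (dS eps X Y u).
Definition dG (eps : C) (X Y : M) (u : M * M) : M :=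
  u.1 *m (invmx Y - eps *: X) + X *m dS eps X Y u.

Definition omega_eps (eps : C) (X Y : M) (u v : M * M) : C :=
  \tr (dF eps X Y u *m dG eps X Y v) - \tr (dF eps X Y v *m dG eps X Y u).

End Rep.

(* Main.v *)
Require Import Defs.
From mathcomp Require Import all_boot all_algebra.
From mathcomp Require Import complex Rstruct.
From mathcomp Require Import ring.
Set Implicit Arguments. Unset Strict Implicit. Unset Printing Implicit Defensive.
Import GRing.Theory Num.Theory.
Local Open Scope ring_scope.

Section Gen.
Variable F : fieldType.
Definition ncpolyG := seq (F * word).
Definition ncaddG (p q : ncpolyG) : ncpolyG := p ++ q.
Definition ncscaleG (c : F) (p : ncpolyG) : ncpolyG := [seq (c * t.1, t.2) | t <- p].
Definition ncoppG (p : ncpolyG) : ncpolyG := ncscaleG (-1) p.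
Definition ncmulG (p q : ncpolyG) : ncpolyG := [seq (a.1 * b.1, a.2 ++ b.2) | a <- p, b <- q].
Definition nccommG (u v : ncpolyG) : ncpolyG := ncaddG (ncmulG u v) (ncoppG (ncmulG v u)).
Definition genG (l : letter) : ncpolyG := [:: (1, [:: l])].
Definition Pi0G : ncpolyG :=
  ncaddG (nccommG (ncmulG (genG Lx) (genG Lxs)) (genG Lxs)) (nccommG (ncmulG (genG Ly) (genG Lxs)) (genG Lys)).
Definition Pi_infG : ncpolyG :=
  nccommG (ncmulG (genG Ly) (genG Lys))
         (ncaddG (ncmulG (genG Ly) (ncmulG (genG Lx) (genG Lxs))) (ncmulG (ncmulG (genG Ly) (genG Ly)) (genG Lys))).
Variable k : nat.
Notation M := 'M[F]_k.
Fixpoint eval_wordG (X Y : M) (cs : seq (M * M)) (w : word) : M :=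
  match w with
  | [::] => 1%:M
  | Lx :: w' => X *m eval_wordG X Y cs w'
  | Ly :: w' => Y *m eval_wordG X Y cs w'
  | Lxs :: w' => (head (0, 0) cs).1 *m eval_wordG X Y (behead cs) w'
  | Lys :: w' => (head (0, 0) cs).2 *m eval_wordG X Y (behead cs) w'
  end.
Definition psi_form2G (P : ncpolyG) (X Y : M) (a b : M * M) : F :=
  \sum_(t <- P) t.1 * \tr (eval_wordG X Y [:: a; b] t.2).
Definition Psi2G (P : ncpolyG) (X Y : M) (a b : M * M) : F :=
  (psi_form2G P X Y a b - psi_form2G P X Y b a) / 2%:R.
End Gen.

Lemma Psi2_gen k eps (X Y : 'M[C]_k) a b :
  Psi2 (ncadd Pi0 (ncscale eps Pi_inf)) X Y a b = Psi2G (ncaddG (Pi0G C) (ncscaleG eps (Pi_infG C))) X Y a b.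
Proof. reflexivity. Qed.

Lemma trC (F : fieldType) k (P Q : 'M[F]_k) : \tr (P *m Q) = \tr (Q *m P).
Proof. exact: mxtrace_mulC. Qed.
Lemma trB (F : fieldType) k (P Q : 'M[F]_k) : \tr (P - Q) = \tr P - \tr Q.
Proof. exact: linearB. Qed.
Lemma trD (F : fieldType) k (P Q : 'M[F]_k) : \tr (P + Q) = \tr P + \tr Q.
Proof. exact: linearD. Qed.
Lemma trZ (F : fieldType) k (c : F) (P : 'M[F]_k) : \tr (c *: P) = c * \tr P.
Proof. exact: mxtraceZ. Qed.
Lemma mulmxZ (F : fieldType) k (c : F) (P Q : 'M[F]_k) : P *m (c *: Q) = c *: (P *m Q).
Proof. by rewrite scalemxAr. Qed.
Lemma trN (F : fieldType) k (P : 'M[F]_k) : \tr (- P) = - \tr P.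
Proof. exact: linearN. Qed.
Ltac rot1 := rewrite {1}trC !mulmxA.
Ltac sref := match goal with |- ?a = ?a => reflexivity end.
Ltac cyc := rewrite !mulmxA; first [ sref | rot1; sref | rot1; rot1; sref
  | rot1; rot1; rot1; sref | rot1; rot1; rot1; rot1; sref | rot1; rot1; rot1; rot1; rot1; sref].

Section S.
Variables (F : fieldType) (k : nat) (eps : F) (X Y A B G H : 'M[F]_k).
Hypothesis two : (2%:R : F) != 0.
Definition U1 := X *m A - A *m X - B *m Y + eps *: (Y *m B *m Y *m X).
Definition U2 := Y *m A + eps *: (Y *m B *m Y *m Y - Y *m X *m A *m Y - Y *m Y *m B *m Y).
Lemma psiE : Psi2G (ncaddG (Pi0G F) (ncscaleG eps (Pi_infG F))) X Y (A,B) (G,H) = \tr (G *m U1) + \tr (H *m U2).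
Proof.
rewrite /Psi2G /psi_form2G /= !big_cons big_nil /=.
rewrite !mulmx1 ?mulr1 ?mul1r ?mulN1r.
have e1 : \tr (X *m (A *m G)) = \tr (G *m X *m A) by cyc.
have e2 : \tr (A *m (X *m G)) = \tr (G *m A *m X) by cyc.
have e3 : \tr (Y *m (A *m H)) = \tr (H *m Y *m A) by cyc.
have e4 : \tr (B *m (Y *m G)) = \tr (G *m B *m Y) by cyc.
have e5 : \tr (Y *m (B *m (Y *m (X *m G)))) = \tr (G *m Y *m B *m Y *m X) by cyc.
have e6 : \tr (Y *m (B *m (Y *m (Y *m H)))) = \tr (H *m Y *m B *m Y *m Y) by cyc.
have e7 : \tr (Y *m (X *m (A *m (Y *m H)))) = \tr (H *m Y *m X *m A *m Y) by cyc.
have e8 : \tr (Y *m (Y *m (B *m (Y *m H)))) = \tr (H *m Y *m Y *m B *m Y) by cyc.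
have f1 : \tr (X *m (G *m A)) = \tr (G *m A *m X) by cyc.
have f2 : \tr (G *m (X *m A)) = \tr (G *m X *m A) by cyc.
have f3 : \tr (Y *m (G *m B)) = \tr (G *m B *m Y) by cyc.
have f4 : \tr (H *m (Y *m A)) = \tr (H *m Y *m A) by cyc.
have f5 : \tr (Y *m (H *m (Y *m (X *m A)))) = \tr (H *m Y *m X *m A *m Y) by cyc.
have f6 : \tr (Y *m (H *m (Y *m (Y *m B)))) = \tr (H *m Y *m Y *m B *m Y) by cyc.
have f7 : \tr (Y *m (X *m (G *m (Y *m B)))) = \tr (G *m Y *m B *m Y *m X) by cyc.
have f8 : \tr (Y *m (Y *m (H *m (Y *m B)))) = \tr (H *m Y *m B *m Y *m Y) by cyc.
rewrite e1 e2 e3 e4 e5 e6 e7 e8 f1 f2 f3 f4 f5 f6 f7 f8.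

rewrite /U1 /U2 !(mulmxDr, mulmxBr, mulmxZ, mulmxN, trD, trB, trZ, trN) !mulmxA big_nil.
field. done.
Qed.
End S.

Lemma tr_delta (F : fieldType) k (U : 'M[F]_k) i j : \tr (delta_mx j i *m U) = U i j.
Proof.
rewrite /mxtrace (bigD1 j) //= big1 ?addr0.
  rewrite mxE (bigD1 i) //= big1 ?addr0 ?mxE ?eqxx ?mul1r //.
  by move=> l /negbTE hl; rewrite mxE hl andbF mul0r.
move=> l /negbTE hl; rewrite mxE big1 // => m _.
by rewrite mxE hl mul0r.
Qed.

Lemma eqG (F : fieldType) k (U V : 'M[F]_k) : (forall G, \tr (G *m U) = \tr (G *m V)) -> U = V.
Proof. by move=> h; apply/matrixP=> i j; rewrite -!tr_delta h. Qed.

Lemma mulZmx (F : fieldType) k (c : F) (P Q : 'M[F]_k) : (c *: P) *m Q = c *: (P *m Q).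
Proof. by rewrite scalemxAl. Qed.

Section OmG.
Variables (F : fieldType) (k : nat).
Notation M := 'M[F]_k.
Definition dinvG (S dS : M) : M := - (invmx S *m dS *m invmx S).
Definition dSG (eps : F) (X Y : M) (u : M * M) : M := dinvG Y u.2 - eps *: u.1.
Definition dFG (eps : F) (X Y : M) (u : M * M) : M := dinvG (invmx Y - eps *: X) (dSG eps X Y u).
Definition dGG (eps : F) (X Y : M) (u : M * M) : M := u.1 *m (invmx Y - eps *: X) + X *m dSG eps X Y u.
Definition omegaG (eps : F) (X Y : M) (u v : M * M) : F :=
  \tr (dFG eps X Y u *m dGG eps X Y v) - \tr (dFG eps X Y v *m dGG eps X Y u).
End OmG.

Section Fin.
Variables (F : fieldType) (k : nat) (eps : F) (T S R X Y B E V1 : 'M[F]_k).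
Hypotheses (hST : S *m T = 1%:M) (hTS : T *m S = 1%:M).
Lemma fin1 : \tr (- (T *m - (R *m S) *m T) *m (V1 *m S + X *m E)) -
  \tr (- (T *m E *m T) *m ((X *m R - R *m X - S *m (Y *m B *m Y)) *m S + X *m - (R *m S)))
  = \tr (R *m V1) - \tr (E *m (Y *m B *m Y)).
Proof.
have cSl (N : 'M[F]_k) : N *m T *m S = N by rewrite -mulmxA hTS mulmx1.
have cSr (N : 'M[F]_k) : N *m S *m T = N by rewrite -mulmxA hST mulmx1.
rewrite !(mulmxDr, mulmxBr, mulmxDl, mulmxBl, mulmxN, mulNmx, mulmxZ, mulZmx, mulmxA).
rewrite ?opprK ?cSl ?cSr ?hST ?hTS ?mul1mx.
rewrite !(trD, trB, trN, trZ).
have r1 : \tr (T *m R *m V1 *m S) = \tr (R *m V1) by rot1; rewrite hST mul1mx.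
have r2 : \tr (T *m R *m X *m E) = \tr (E *m T *m R *m X) by rot1.
have r3 : \tr (T *m E *m T *m R *m X *m S) = \tr (E *m T *m R *m X) by rot1; rewrite hST mul1mx.
have r4 : \tr (T *m E *m Y *m B *m Y *m S) = \tr (E *m Y *m B *m Y) by rot1; rewrite hST mul1mx.
rewrite r1 r2 r3 r4 ?mulmxA; ring.
Qed.
End Fin.

Lemma fin2 (F : fieldType) k (eps : F) (Yi R A Y B E V1 V2 : 'M[F]_k) :
  Yi *m Y = 1%:M -> Y *m Yi = 1%:M ->
  R = A - eps *: (Y *m B *m Y) -> E = - (Yi *m V2 *m Yi) - eps *: V1 ->
  \tr (R *m V1) - \tr (E *m (Y *m B *m Y)) = \tr (A *m V1 + B *m V2).
Proof.
move=> h1 h2 -> ->.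
have c1 (N : 'M[F]_k) : N *m Yi *m Y = N by rewrite -mulmxA h1 mulmx1.
rewrite !(mulmxDr, mulmxBr, mulmxDl, mulmxBl, mulmxN, mulNmx, mulmxZ, mulZmx, mulmxA).
rewrite ?c1 !(trD, trB, trN, trZ).
have r1 : \tr (Y *m B *m Y *m V1) = \tr (V1 *m Y *m B *m Y) by rot1.
have r2 : \tr (Yi *m V2 *m B *m Y) = \tr (B *m V2) by rot1; rewrite h2 mul1mx trC.
rewrite r1 r2; ring.
Qed.

Section K.
Variables (F : fieldType) (k : nat) (eps : F) (X Y A B : 'M[F]_k).
Hypothesis hY : Y \in unitmx.
Let U1 := U1 eps X Y A B.
Let U2 := U2 eps X Y A B.
Let R := A - eps *: (Y *m B *m Y).
Lemma cYl (M : 'M[F]_k) : M *m invmx Y *m Y = M.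
Proof. by rewrite -mulmxA mulVmx // mulmx1. Qed.
Lemma cYr (M : 'M[F]_k) : M *m Y *m invmx Y = M.
Proof. by rewrite -mulmxA mulmxV // mulmx1. Qed.

Ltac expand := rewrite !(mulmxDr, mulmxBr, mulmxDl, mulmxBl, mulmxN, mulNmx, mulmxZ, mulZmx, mulmxA).
Ltac trlin := rewrite !(trD, trB, trN, trZ).

Lemma claimW : invmx Y *m U2 *m invmx Y + eps *: U1 = R *m (invmx Y - eps *: X).
Proof.
apply: eqG => G; rewrite /U1 /U2 /R /U1 /U2.
expand. rewrite ?cYl ?cYr. trlin. ring.
Qed.

Lemma claimU1 : U1 = X *m R - R *m X - (invmx Y - eps *: X) *m (Y *m B *m Y).
Proof.
apply: eqG => G; rewrite /U1 /U2 /R /U1 /U2.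
expand. rewrite ?cYl ?cYr. trlin. ring.
Qed.


Hypothesis hS : (invmx Y - eps *: X) \in unitmx.
Lemma omegaK (V1 V2 : 'M[F]_k) : omegaG eps X Y (U1, U2) (V1, V2) = \tr (A *m V1 + B *m V2).
Proof.
have hdS : dSG eps X Y (U1, U2) = - (invmx Y *m U2 *m invmx Y + eps *: U1).
  by rewrite /dSG /dinvG /= opprD.
have hU1 := claimU1.
have hW := claimW.
rewrite /omegaG /dFG /dGG hdS hW /= {hdS hW}.
rewrite /dSG /dinvG /= hU1 {hU1}.
rewrite (@fin1 F k (invmx (invmx Y - eps *: X)) (invmx Y - eps *: X) R X Y B
   (- (invmx Y *m V2 *m invmx Y) - eps *: V1) V1 (mulmxV hS) (mulVmx hS)).
exact: (fin2 (mulVmx hY) (mulmxV hY)).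
Qed.
End K.

Definition pairingG (F : fieldType) k (a u : 'M[F]_k * 'M[F]_k) : F := \tr (a.1 *m u.1 + a.2 *m u.2).

Lemma mainG (F : fieldType) k (eps : F) (X Y : 'M[F]_k) : (2%:R : F) != 0 ->
  Y \in unitmx -> (invmx Y - eps *: X) \in unitmx ->
  (forall a, (forall b, Psi2G (ncaddG (Pi0G F) (ncscaleG eps (Pi_infG F))) X Y a b = 0) -> a = (0,0)) /\
  (forall a u, (forall g, pairingG g u = Psi2G (ncaddG (Pi0G F) (ncscaleG eps (Pi_infG F))) X Y a g) ->
     forall v, omegaG eps X Y u v = pairingG a v).
Proof.
move=> two hY hS.
have hpsi A B G H : Psi2G (ncaddG (Pi0G F) (ncscaleG eps (Pi_infG F))) X Y (A,B) (G,H)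
   = \tr (G *m U1 eps X Y A B) + \tr (H *m U2 eps X Y A B) by exact: psiE.
have tr0 (M : 'M[F]_k) : \tr (0 *m M) = 0 by rewrite mul0mx linear0.
have om0 v : omegaG eps X Y (0,0) v = 0.
  by rewrite /omegaG /dFG /dGG /dSG /dinvG /= !(mulmx0, mul0mx, scaler0, subr0, oppr0, addr0, linear0, mulr0, mul0r, subrr).
split.
  move=> [A B] h.
  have e1 : U1 eps X Y A B = 0.
    apply: eqG => G; have := h (G, 0); rewrite hpsi tr0 addr0 => ->.
    by rewrite mulmx0 linear0.
  have e2 : U2 eps X Y A B = 0.
    apply: eqG => G; have := h (0, G); rewrite hpsi tr0 add0r => ->.
    by rewrite mulmx0 linear0.
  have hv v : pairingG (A, B) v = 0.
    by case: v => V1 V2; rewrite /pairingG /= -(omegaK A B hY hS V1 V2) e1 e2 om0.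
  congr (_, _); apply: eqG => G.
    have := hv (G, 0); rewrite /pairingG /= mulmx0 addr0 trC => ->.
    by rewrite mulmx0 linear0.
  have := hv (0, G); rewrite /pairingG /= mulmx0 add0r trC => ->.
  by rewrite mulmx0 linear0.
move=> [A B] [U W] hu [V1 V2].
have eU : U = U1 eps X Y A B.
  apply: eqG => G; have := hu (G, 0); rewrite hpsi /pairingG /= tr0 !mul0mx !addr0 => ->.
  done.
have eW : W = U2 eps X Y A B.
  apply: eqG => G; have := hu (0, G); rewrite hpsi /pairingG /= tr0 !mul0mx !add0r => ->.
  done.
by rewrite eU eW (omegaK A B hY hS) /pairingG.
Qed.

Theorem mainTheorem11 (k : nat) (eps : C) (X Y : 'M[C]_k) :
  Y \in unitmx -> (invmx Y - eps *: X) \in unitmx ->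
  bivector_nondegenerate (Psi2 (ncadd Pi0 (ncscale eps Pi_inf)) X Y) /\
  inverse_form (Psi2 (ncadd Pi0 (ncscale eps Pi_inf)) X Y) (omega_eps eps X Y).
Proof.
move=> hY hS.
have two : (2%:R : C) != 0.
  have h : (2%:R : complex Rdefinitions.R) != 0 by rewrite pnatr_eq0.
  exact: h.
have [h1 h2] := mainG two hY hS.
split; [exact: h1 | exact: h2].
Qed.
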